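(* Let $k$ be a field and $\mathcal{R}=\mathrm{RCFM}(k)$. Then: (1) $\mathsf{A}\mathcal{R}=\{\mathsf{R}\in\mathcal{R}: \mathsf{r}_{0j}=0\text{ for all }j\}$; (2) $(\mathsf{I}-\mathsf{A})\mathcal{R}=\{\mathsf{R}\in\mathcal{R}: \sum_{i\in\mathbb{N}_0}\mathsf{r}_{ij}=0\text{ for all }j\}$; (3) $(\mathsf{I}-\mathsf{A}^t)\mathcal{R}=\{\mathsf{R}\in\mathcal{R}: \text{for every }i\in\mathbb{N}_0,\ \sum_{n\ge i}\mathsf{r}_{nj}=0\text{ for all but finitely many }j\}$; (4) $(\mathsf{I}-\mathsf{B}^t)\mathcal{R}=\{\mathsf{R}\in\mathcal{R}: \text{for every }m\in\mathbb{N}_0\text{ and }i\le m,\ \sum_{n\ge m}\mathsf{r}_{i+\frac{n(n+1)}{2},\,j}=0\text{ for all but finitely many }j\}$.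
   Context: $\mathcal{R}=\mathrm{RCFM}(k)$ is the $k$-algebra of $\mathbb{N}_0\times\mathbb{N}_0$ matrices over $k$ with finitely many nonzero entries in each row and each column; $\mathsf{r}_{ij}$ denotes the $(i,j)$ entry of $\mathsf{R}$ (the sums above are finite since columns are finite). $\mathsf{A}$: $\mathsf{a}_{i+1,i}=1$ ($i\in\mathbb{N}_0$), other entries $0$; $\mathsf{B}$: $\mathsf{b}_{\frac{n(n+1)}{2}+i,\frac{(n-1)n}{2}+i}=1$ ($n>0$, $0\le i<n$), other entries $0$; $\mathsf{I}$ is the identity and ${}^t$ transposition. *)

(* Defs.v *)
From mathcomp Require Import all_boot all_order all_algebra.
From Stdlib Require Import ClassicalEpsilon.
Set Implicit Arguments. Unset Strict Implicit. Unset Printing Implicit Defensive.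
Import GRing.Theory.
Local Open Scope ring_scope.

Definition nmat (K : fieldType) := nat -> nat -> K.

Definition fin_supp (K : fieldType) (f : nat -> K) : Prop :=
  exists N : nat, forall n : nat, (N <= n)%N -> f n = 0.

(* Sum of a finitely supported sequence (0 if not finitely supported; the
   value does not depend on the chosen bound). *)
Definition fsum (K : fieldType) (f : nat -> K) : K :=
  match excluded_middle_informative (fin_supp f) with
  | left H => \sum_(n < proj1_sig (constructive_indefinite_description _ H)) f n
  | right _ => 0
  end.

Definition rcfm (K : fieldType) (M : nmat K) : Prop :=
  (forall i, fin_supp (fun j => M i j)) /\ (forall j, fin_supp (fun i => M i j)).

Definition mmul (K : fieldType) (X Y : nmat K) : nmat K :=
  fun i j => fsum (fun l => X i l * Y l j).
Definition msub (K : fieldType) (X Y : nmat K) : nmat K := fun i j => X i j - Y i j.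
Definition mtr (K : fieldType) (X : nmat K) : nmat K := fun i j => X j i.

Definition mI (K : fieldType) : nmat K := fun i j => (i == j)%:R.
Definition mA (K : fieldType) : nmat K := fun i j => (i == j.+1)%:R.
(* B : b_{n(n+1)/2 + i, (n-1)n/2 + i} = 1 for n > 0, 0 <= i < n
   (any such n satisfies n <= row index, and n : 'I_m is automatically < m). *)
Definition mB (K : fieldType) : nmat K := fun r c =>
  [exists n : 'I_r.+1, exists i : 'I_n,
     (r == (n * n.+1) %/ 2 + i)%N && (c == (n.-1 * n) %/ 2 + i)%N]%:R.

Definition left_ideal (K : fieldType) (X : nmat K) (R : nmat K) : Prop :=
  exists S : nmat K, rcfm S /\ R = mmul X S.

(* Main.v *)
Require Import Defs.
From mathcomp Require Import all_boot all_order all_algebra.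
From mathcomp Require Import zify.
From Stdlib Require Import FunctionalExtensionality ClassicalEpsilon.
Set Implicit Arguments. Unset Strict Implicit. Unset Printing Implicit Defensive.
Import GRing.Theory.
Local Open Scope ring_scope.

Definition tri n := ((n * n.+1) %/ 2)%N.
Lemma triS n : tri n.+1 = (tri n + n.+1)%N.
Proof. rewrite /tri. lia. Qed.
Lemma tri_ge n : (n <= tri n)%N.
Proof. elim: n => [//|n IH]; rewrite triS; lia. Qed.
Lemma tri_mono a k : (tri a <= tri (a + k))%N.
Proof. elim: k => [|k IH]; first by rewrite addn0. rewrite addnS triS; lia. Qed.
Lemma tri_uniq a b x y : (x <= a)%N -> (y <= b)%N -> (tri a + x = tri b + y)%N ->
  a = b /\ x = y.
Proof.
move=> xa yb E.
have key : forall a b x : nat, (x <= a)%N -> (a < b)%N -> (tri a + x < tri b)%N.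
  move=> a' b' x' H0 H1.
  have := tri_mono a'.+1 (b' - a'.+1). rewrite triS subnKC //. lia.
case: (ltngtP a b) => H.
- have := key _ _ _ xa H. lia.
- have := key _ _ _ yb H. lia.
- subst; split => //; lia.
Qed.

Fixpoint dec (r : nat) : nat * nat :=
  match r with
  | 0 => (0, 0)%N
  | r'.+1 => let: (m, p) := dec r' in if (p < m)%N then (m, p.+1) else (m.+1, 0%N)
  end.
Lemma dec_spec r : ((dec r).2 <= (dec r).1)%N /\ r = (tri (dec r).1 + (dec r).2)%N.
Proof.
elim: r => [//|r [H1 H2]] /=.
case: (dec r) H1 H2 => m p /= H1 H2.
case: ifP => H /=.
- split => //. lia.
- have pm : p = m by lia.
  subst. split => //. rewrite triS. lia.
Qed.
Lemma dec_tri m p : (p <= m)%N -> dec (tri m + p) = (m, p).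
Proof.
move=> pm. have [H1 H2] := dec_spec (tri m + p).
have [E1 E2] := tri_uniq H1 pm (esym H2).
by case: (dec _) E1 E2 => a b /= -> ->.
Qed.

Definition sB r := (r + (dec r).1 + 1)%N.
Lemma sB_gt r : (r < sB r)%N.
Proof. rewrite /sB; lia. Qed.
Lemma sB_tri m p : (p <= m)%N -> sB (tri m + p) = (tri m.+1 + p)%N.
Proof. move=> pm; rewrite /sB dec_tri //= triS; lia. Qed.
Lemma iter_sB k m p : (p <= m)%N -> iter k sB (tri m + p) = (tri (m + k) + p)%N.
Proof.
move=> pm; elim: k => [|k IH]; first by rewrite addn0.
by rewrite iterS IH sB_tri ?addnS //; lia.
Qed.

Lemma mB_sB (K : fieldType) l r : mB K l r = (l == sB r)%:R.
Proof.
rewrite /mB; congr (_%:R); congr (nat_of_bool _).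
apply/idP/idP.
- case/existsP=> n /existsP [i /andP [/eqP Hl /eqP Hr]].
  apply/eqP.
  have Hi := ltn_ord i.
  move: Hl Hr Hi; move: (nat_of_ord i) => ii; move: (nat_of_ord n) => nn.
  case: nn => [|n'] Hl Hr Hi //.
  rewrite /= in Hr. rewrite Hr -/(tri n') sB_tri; last by lia.
  by rewrite Hl.
- move=> /eqP Hl.
  have [H1 H2] := dec_spec r.
  move: Hl; rewrite {1}H2 sB_tri // => Hl.
  have Hn : (((dec r).1).+1 < l.+1)%N.
    have := tri_ge ((dec r).1).+1. lia.
  have Hp : ((dec r).2 < ((dec r).1).+1)%N by lia.
  apply/existsP; exists (Ordinal Hn); apply/existsP; exists (Ordinal Hp) => /=.
  apply/andP; split; apply/eqP => //. 
Qed.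

Section FS.
Variable K : fieldType.
Implicit Types f g : nat -> K.

Lemma sum_bound f (M N : nat) : (M <= N)%N -> (forall n, (M <= n)%N -> f n = 0) ->
  \sum_(n < N) f n = \sum_(n < M) f n.
Proof.
move=> MN Hf; elim: N MN => [|N IH]; first by rewrite leqn0 => /eqP ->.
rewrite leq_eqVlt => /orP [/eqP <- // | MN].
rewrite ltnS in MN.
by rewrite big_ord_recr /= IH // Hf // addr0.
Qed.

Lemma fsum_eq f (N : nat) : (forall n, (N <= n)%N -> f n = 0) -> fsum f = \sum_(n < N) f n.
Proof.
move=> HN; rewrite /fsum; case: excluded_middle_informative => [H|H];
  last by exfalso; apply: H; exists N.
case: (constructive_indefinite_description _ H) => M HM /=.
case: (leqP M N) => MN; first by rewrite (sum_bound MN HM).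
by rewrite (sum_bound (ltnW MN) HN).
Qed.

Lemma fsum_zero f : (forall n, f n = 0) -> fsum f = 0.
Proof. by move=> H; rewrite (@fsum_eq f 0) ?big_ord0. Qed.

Lemma fsum_delta f (a : nat) : (forall n, n != a -> f n = 0) -> fsum f = f a.
Proof.
move=> H; rewrite (@fsum_eq f a.+1).
  rewrite big_ord_recr /= big1 ?add0r // => i _; apply: H.
  by rewrite neq_ltn ltn_ord.
by move=> n Hn; apply: H; rewrite neq_ltn Hn orbT.
Qed.

Lemma fin_supp_delta f (a : nat) : (forall n, n != a -> f n = 0) -> fin_supp f.
Proof. move=> H; exists a.+1 => n Hn; apply: H; by rewrite neq_ltn Hn orbT. Qed.

Lemma fin_supp_sub f g : fin_supp f -> fin_supp g -> fin_supp (fun n => f n - g n).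
Proof.
case=> N1 H1 [N2 H2]; exists (maxn N1 N2) => n; rewrite geq_max => /andP [a b].
by rewrite H1 // H2 // subr0.
Qed.

Lemma fsum_sub f g : fin_supp f -> fin_supp g ->
  fsum (fun n => f n - g n) = fsum f - fsum g.
Proof.
case=> N1 H1 [N2 H2].
rewrite (@fsum_eq f (maxn N1 N2)); last by move=> n; rewrite geq_max => /andP [a b]; auto.
rewrite (@fsum_eq g (maxn N1 N2)); last by move=> n; rewrite geq_max => /andP [a b]; auto.
rewrite (@fsum_eq _ (maxn N1 N2)) ?sumrB //.
by move=> n; rewrite geq_max => /andP [a b]; rewrite H1 // H2 // subr0.
Qed.

Lemma fsum_shift f : fin_supp f -> fsum f = f 0%N + fsum (fun k => f k.+1).
Proof.
case=> N H.
rewrite (@fsum_eq f N.+1); last by move=> n Hn; apply: H; exact: ltnW.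
rewrite (@fsum_eq (fun k => f k.+1) N); last by move=> n Hn; apply: H; exact: leqW.
by rewrite big_ord_recl.
Qed.

Lemma fin_supp_from f (i : nat) : fin_supp f -> fin_supp (fun n => if (i <= n)%N then f n else 0).
Proof. case=> N H; exists N => n Hn; case: ifP => // _; exact: H. Qed.

Lemma fsum_from f (i : nat) : fin_supp f ->
  fsum (fun n => if (i <= n)%N then f n else 0) = fsum (fun k => f (i + k)%N).
Proof.
elim: i f => [|i IH] f Hf.
  by congr fsum; apply: functional_extensionality => n.
rewrite fsum_shift; last exact: fin_supp_from.
rewrite /= add0r.
have Hf' : fin_supp (fun k => f k.+1).
  by case: Hf => N H; exists N => n Hn; apply: H; exact: leqW.
rewrite -(IH (fun k => f k.+1) Hf').
by congr fsum; apply: functional_extensionality => n; rewrite ltnS.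
Qed.

End FS.

Section Main.
Variable K : fieldType.

Lemma mmul_shift (X S : nmat K) (s : nat -> nat) :
  (forall r l, X r l = (l == s r)%:R) ->
  forall r j, mmul (msub (mI K) X) S r j = S r j - S (s r) j.
Proof.
move=> HX r j; rewrite /mmul /msub /mI.
have -> : (fun l => ((r == l)%:R - X r l) * S l j) =
          (fun l => (r == l)%:R * S l j - X r l * S l j).
  by apply: functional_extensionality => l; rewrite mulrBl.
have D1 : forall n, n != r -> (r == n)%:R * S n j = 0.
  by move=> n Hn; rewrite eq_sym (negbTE Hn) mul0r.
have D2 : forall n, n != s r -> X r n * S n j = 0.
  by move=> n Hn; rewrite HX (negbTE Hn) mul0r.
rewrite fsum_sub; [|exact: fin_supp_delta D1|exact: fin_supp_delta D2].
by rewrite (fsum_delta D1) (fsum_delta D2) HX !eqxx !mul1r.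
Qed.

Lemma iter_ge (s : nat -> nat) : (forall r, (r < s r)%N) ->
  forall k r, (k + r <= iter k s r)%N.
Proof.
move=> Hs; elim=> [//|k IH] r; rewrite iterS.
have := IH r; have := Hs (iter k s r); lia.
Qed.

Lemma shift_ideal (X : nmat K) (s : nat -> nat) (R : nmat K) :
  (forall r, (r < s r)%N) -> (forall r l, X r l = (l == s r)%:R) ->
  left_ideal (msub (mI K) X) R <->
  (rcfm R /\ forall r, exists J : nat, forall j : nat, (J <= j)%N ->
       fsum (fun k => R (iter k s r) j) = 0).
Proof.
move=> Hs HX; have Hge := iter_ge Hs; split.
- case=> S [[Srow Scol] ->].
  have ER : mmul (msub (mI K) X) S = fun r j => S r j - S (s r) j.
    apply: functional_extensionality => r; apply: functional_extensionality => j.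
    by rewrite (mmul_shift S HX).
  rewrite ER; split; [split|].
  + move=> r; exact: fin_supp_sub (Srow r) (Srow (s r)).
  + move=> j; case: (Scol j) => N HN; exists N => r Hr /=.
    rewrite (HN r) // (HN (s r)) ?subr0 //.
    exact: leq_trans Hr (ltnW (Hs r)).
  + move=> r; case: (Srow r) => J HJ; exists J => j Hj.
    have Hg : fin_supp (fun k => S (iter k s r) j).
      case: (Scol j) => N HN; exists N => k Hk; apply: HN.
      have := Hge k r; lia.
    have Hg' : fin_supp (fun k => S (iter k.+1 s r) j).
      case: (Scol j) => N HN; exists N => k Hk; apply: HN.
      have := Hge k.+1 r; lia.
    rewrite (@fsum_sub _ (fun k => S (iter k s r) j) (fun k => S (iter k.+1 s r) j)) //.
    by rewrite (fsum_shift Hg) addrK /= HJ.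
- case=> [[Rrow Rcol] Hc].
  have Hg : forall r j, fin_supp (fun k => R (iter k s r) j).
    move=> r j; case: (Rcol j) => N HN; exists N => k Hk; apply: HN.
    have := Hge k r; lia.
  exists (fun r j => fsum (fun k => R (iter k s r) j)); split; [split|].
  + move=> r; case: (Hc r) => J HJ; by exists J.
  + move=> j; case: (Rcol j) => N HN; exists N => r Hr; apply: fsum_zero => k.
    apply: HN; have := Hge k r; lia.
  + apply: functional_extensionality => r; apply: functional_extensionality => j.
    rewrite (mmul_shift _ HX) (fsum_shift (Hg r j)) /=.
    have -> : (fun k => R (iter k.+1 s r) j) = (fun k => R (iter k s (s r)) j).
      by apply: functional_extensionality => k; rewrite iterSr.
    by rewrite addrK.
Qed.

Lemma mmulA (S : nmat K) i j :
  mmul (mA K) S i j = (match i with 0 => 0 | k.+1 => S k j end).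
Proof.
rewrite /mmul /mA; case: i => [|k].
  by apply: fsum_zero => n; rewrite mul0r.
have D : forall n, n != k -> (k.+1 == n.+1)%:R * S n j = 0.
  by move=> n Hn; rewrite eqSS eq_sym (negbTE Hn) mul0r.
by rewrite (fsum_delta D) eqxx mul1r.
Qed.

Lemma mmulIA (S : nmat K) i j :
  mmul (msub (mI K) (mA K)) S i j = S i j - (match i with 0 => 0 | k.+1 => S k j end).
Proof.
rewrite -mmulA /mmul /msub /mI.
have -> : (fun l => ((i == l)%:R - mA K i l) * S l j) =
          (fun l => (i == l)%:R * S l j - mA K i l * S l j).
  by apply: functional_extensionality => l; rewrite mulrBl.
have D1 : forall n, n != i -> (i == n)%:R * S n j = 0.
  by move=> n Hn; rewrite eq_sym (negbTE Hn) mul0r.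
have D2 : forall n, n != i.-1 -> mA K i n * S n j = 0.
  move=> n Hn; rewrite /mA; case: i D1 Hn => [|k] _ Hn /=; first by rewrite mul0r.
  by rewrite eqSS eq_sym (negbTE Hn) mul0r.
rewrite fsum_sub; [|exact: fin_supp_delta D1|exact: fin_supp_delta D2].
by rewrite (fsum_delta D1) eqxx mul1r.
Qed.

Lemma part1 (R : nmat K) :
  left_ideal (mA K) R <-> (rcfm R /\ forall j, R 0%N j = 0).
Proof.
split.
- case=> S [[Srow Scol] ->]; split; [split|].
  + case=> [|k]; first by exists 0%N => j _; rewrite mmulA.
    case: (Srow k) => N HN; exists N => j Hj; by rewrite mmulA HN.
  + move=> j; case: (Scol j) => N HN; exists N.+1 => i Hi; rewrite mmulA.
    case: i Hi => [//|k] Hk; exact: HN.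
  + by move=> j; rewrite mmulA.
- case=> [[Rrow Rcol] H0]; exists (fun i j => R i.+1 j); split; [split|].
  + move=> i; exact: Rrow i.+1.
  + move=> j; case: (Rcol j) => N HN; exists N => i Hi; apply: HN; exact: leqW.
  + apply: functional_extensionality => i; apply: functional_extensionality => j.
    by rewrite mmulA; case: i => [|k] //; rewrite H0.
Qed.

Lemma part2 (R : nmat K) :
  left_ideal (msub (mI K) (mA K)) R <->
  (rcfm R /\ forall j, fsum (fun i => R i j) = 0).
Proof.
split.
- case=> S [[Srow Scol] ->].
  have ER : mmul (msub (mI K) (mA K)) S =
            fun i j => S i j - (match i with 0 => 0 | k.+1 => S k j end).
    by do 2 (apply: functional_extensionality => ?); apply: mmulIA.
  rewrite ER.
  have Hh : forall j, fin_supp (fun i => match i with 0 => 0 | k.+1 => S k j end).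
    move=> j; case: (Scol j) => N HN; exists N.+1 => i; case: i => [//|k] Hk.
    exact: HN.
  split; [split|].
  + move=> i; apply: fin_supp_sub (Srow i) _.
    case: i => [|k]; [by exists 0%N | exact: Srow k].
  + move=> j; case: (Scol j) => N HN; exists N.+1 => i Hi /=.
    rewrite HN; last exact: ltnW.
    by case: i Hi => [//|k] Hk; rewrite HN // subr0.
  + move=> j; rewrite fsum_sub; [|exact: Scol j|exact: Hh j].
    by rewrite (fsum_shift (Hh j)) /= add0r subrr.
- case=> [[Rrow Rcol] H0].
  have CB : forall i, exists N, forall j, (N <= j)%N -> forall n, (n <= i)%N -> R n j = 0.
    elim=> [|i [N1 H1]].
      case: (Rrow 0%N) => N HN; exists N => j Hj n; rewrite leqn0 => /eqP ->; exact: HN.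
    case: (Rrow i.+1) => N2 H2; exists (maxn N1 N2) => j; rewrite geq_max => /andP [a b] n.
    rewrite leq_eqVlt => /orP [/eqP -> | Hn]; first exact: H2.
    by apply: H1.
  exists (fun i j => \sum_(n < i.+1) R n j); split; [split|].
  + move=> i; case: (CB i) => N HN; exists N => j Hj; apply: big1 => n _.
    apply: HN => //; exact: (ltn_ord n).
  + move=> j; case: (Rcol j) => N HN; exists N => i Hi.
    rewrite -(@fsum_eq _ (fun n => R n j) i.+1); first exact: H0.
    move=> n Hn; apply: HN; lia.
  + apply: functional_extensionality => i; apply: functional_extensionality => j.
    rewrite mmulIA; case: i => [|k].
      by rewrite big_ord_recr big_ord0 /= add0r subr0.
    by rewrite big_ord_recr /= [_ + R _ j]addrC addrK.
Qed.

End Main.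

Lemma conv3 (K : fieldType) (R : nmat K) : rcfm R -> forall i j : nat,
  fsum (fun n => if (i <= n)%N then R n j else 0) = fsum (fun k => R (iter k succn i) j).
Proof.
case=> _ Rcol i j; rewrite (@fsum_from _ (fun n => R n j)) //.
by congr fsum; apply: functional_extensionality => k; rewrite iter_succn.
Qed.

Lemma conv4 (K : fieldType) (R : nmat K) : rcfm R -> forall m i j : nat, (i <= m)%N ->
  fsum (fun n => if (m <= n)%N then R (i + (n * n.+1) %/ 2)%N j else 0) =
  fsum (fun k => R (iter k sB (tri m + i)) j).
Proof.
case=> _ Rcol m i j im.
rewrite (@fsum_from _ (fun n => R (i + (n * n.+1) %/ 2)%N j)).
  by congr fsum; apply: functional_extensionality => k; rewrite iter_sB // /tri addnC.
case: (Rcol j) => N HN; exists N => n Hn; apply: HN.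
have := tri_ge n; rewrite /tri; lia.
Qed.

Theorem lemmaA2 (K : fieldType) :
  (forall R : nmat K,
     left_ideal (mA K) R <-> (rcfm R /\ forall j, R 0%N j = 0)) /\
  (forall R : nmat K,
     left_ideal (msub (mI K) (mA K)) R <->
     (rcfm R /\ forall j, fsum (fun i => R i j) = 0)) /\
  (forall R : nmat K,
     left_ideal (msub (mI K) (mtr (mA K))) R <->
     (rcfm R /\ forall i : nat, exists J : nat, forall j : nat, (J <= j)%N ->
        fsum (fun n => if (i <= n)%N then R n j else 0) = 0)) /\
  (forall R : nmat K,
     left_ideal (msub (mI K) (mtr (mB K))) R <->
     (rcfm R /\ forall m i : nat, (i <= m)%N -> exists J : nat, forall j : nat, (J <= j)%N ->
        fsum (fun n => if (m <= n)%N then R (i + (n * n.+1) %/ 2)%N j else 0) = 0)).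
Proof.
split; first exact: part1.
split; first exact: part2.
split.
- move=> R; rewrite (@shift_ideal K _ succn R) //.
  split; case=> HR Hc; split => // i; case: (Hc i) => J HJ; exists J => j Hj.
  + by rewrite (conv3 HR) HJ.
  + by rewrite -(conv3 HR) HJ.
- move=> R; rewrite (@shift_ideal K _ sB R) //; last first.
    by move=> r l; rewrite /mtr mB_sB.
    exact: sB_gt.
  split; case=> HR Hc; split => //.
  + move=> m i im; case: (Hc (tri m + i)%N) => J HJ; exists J => j Hj.
    by rewrite (conv4 HR) // HJ.
  + move=> r; have [H1 H2] := dec_spec r.
    case: (Hc _ _ H1) => J HJ; exists J => j Hj.
    by rewrite H2 -(conv4 HR) // HJ.
Qed.
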